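(* For the asynchronous Sinkhorn iteration described in the context, the iterates $(u^{(\ell)},v^{(\ell)})$ converge to a solution $(u,v)\in\mathbb R_{++}^X\times\mathbb R_{++}^Y$ of the scaling problem, i.e. $\mathrm{diag}(u)K\mathrm{diag}(v)$ has row sums $\mu$ and column sums $\nu$, and $q^{(\ell)}\to1$.
   Context: $X,Y$ finite sets, $\mu\in\mathcal P(X)$, $\nu\in\mathcal P(Y)$ with strictly positive entries, $c\in\mathbb R_+^{X\times Y}$, $\varepsilon>0$, kernel $K(x,y)=\exp(-c(x,y)/\varepsilon)\mu(x)\nu(y)$. Asynchronous Sinkhorn iteration: given $v^{(0)}\in\mathbb R_{++}^Y$, for $\ell\ge0$: $u^{(\ell+1)}=\mu\oslash(Kv^{(\ell)})$, $\hat v^{(\ell+1)}=\nu\oslash(K^\top u^{(\ell+1)})$, $v^{(\ell+1)}=\min\{v^{(\ell)},\hat v^{(\ell+1)}\}$ componentwise, $\pi^{(\ell+1)}=\mathrm{diag}(u^{(\ell+1)})K\mathrm{diag}(v^{(\ell+1)})$, $q^{(\ell+1)}=\sum_{x,y}\pi^{(\ell+1)}(x,y)$; $\oslash$ is componentwise division. *)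

(* Defs.v *)
From HB Require Import structures.
From mathcomp Require Import all_boot all_order all_algebra.
From mathcomp Require Import all_classical all_reals all_analysis.
Set Implicit Arguments. Unset Strict Implicit. Unset Printing Implicit Defensive.
Import Order.TTheory GRing.Theory Num.Theory.
Local Open Scope ring_scope.

Section Sinkhorn.
Variables (R : realType) (X Y : finType).
Variables (mu : X -> R) (nu : Y -> R) (c : X -> Y -> R) (eps : R).

Definition kernelK (x : X) (y : Y) : R := expR (- c x y / eps) * mu x * nu y.

Definition Kv (v : Y -> R) (x : X) : R := \sum_(y : Y) kernelK x y * v y.
Definition KTu (u : X -> R) (y : Y) : R := \sum_(x : X) kernelK x y * u x.

Definition u_upd (v : Y -> R) (x : X) : R := mu x / Kv v x.
Definition vhat_upd (u : X -> R) (y : Y) : R := nu y / KTu u y.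

Fixpoint v_iter (v0 : Y -> R) (l : nat) : Y -> R :=
  match l with
  | 0 => v0
  | l'.+1 => fun y => Num.min (v_iter v0 l' y) (vhat_upd (u_upd (v_iter v0 l') ) y)
  end.

(* u_iter v0 l = u^(l) for l >= 1 (= mu ⊘ K v^(l-1));
   at l = 0 (where the paper leaves u^(0) undefined) it is conventionally
   mu ⊘ K v^(0), which does not affect limits. *)
Definition u_iter (v0 : Y -> R) (l : nat) : X -> R := u_upd (v_iter v0 l.-1).

Definition pi_iter (v0 : Y -> R) (l : nat) (x : X) (y : Y) : R :=
  u_iter v0 l x * kernelK x y * v_iter v0 l y.
Definition q_iter (v0 : Y -> R) (l : nat) : R :=
  \sum_(x : X) \sum_(y : Y) pi_iter v0 l x y.

End Sinkhorn.

(* Main.v *)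
Require Import Defs.
From HB Require Import structures.
From mathcomp Require Import all_boot all_order all_algebra.
From mathcomp Require Import all_classical all_reals all_analysis.
From mathcomp Require Import ring lra.
Import Order.TTheory GRing.Theory Num.Theory.
Import numFieldNormedType.Exports.
Local Open Scope ring_scope.
Local Open Scope classical_set_scope.
Set Implicit Arguments. Unset Strict Implicit.
Import ArrowAsProduct.

Lemma D_compact (R : realType) (Y : finType) (a b : R) :
  compact [set w : Y -> R | forall y, `[a, b]%classic (w y)].
Proof. exact: (@tychonoff Y (fun _ => R) (fun _ => `[a, b]%classic) (fun _ => @segment_compact R a b)). Qed.

Lemma cvg_sumR (R : realType) (I : finType) (T : Type) (F : set_system T) {FF : Filter F} (f : I -> T -> R) (a : I -> R) :
  (forall i, f i z @[z --> F] --> a i) -> \sum_i f i z @[z --> F] --> \sum_i a i.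
Proof.
move=> H; apply: cvg_big => //; first exact: add_continuous.
Qed.

Lemma proj_cvg (R : realType) (Y : finType) (w : Y -> R) y : z y @[z --> w] --> w y.
Proof. exact: (@proj_continuous Y (fun _ => R) y w). Qed.

Lemma ln_cvg (R : realType) (T : Type) (F : set_system T) {FF : Filter F} (f : T -> R) (a : R) : 0 < a ->
  f @ F --> a -> ln (f z) @[z --> F] --> ln a.
Proof. move=> a0 fa; exact: (continuous_cvg _ (continuous_ln a0) fa). Qed.


Section Sk.
Variables (R : realType) (X Y : finType) (mu : X -> R) (nu : Y -> R) (c : X -> Y -> R) (eps : R).
Hypotheses (mu_gt0 : forall x, 0 < mu x) (mu1 : \sum_(x : X) mu x = 1)
  (nu_gt0 : forall y, 0 < nu y) (nu1 : \sum_(y : Y) nu y = 1).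
Variables (x0 : X) (y0 : Y).

Local Notation K := (kernelK mu nu c eps).
Local Notation Kv := (Kv mu nu c eps).
Local Notation KTu := (KTu mu nu c eps).
Local Notation U := (u_upd mu nu c eps).
Definition T (v : Y -> R) := vhat_upd mu nu c eps (U v).
Definition pos (v : Y -> R) := forall y, 0 < v y.

Lemma K_gt0 x y : 0 < K x y.
Proof. by rewrite /kernelK !mulr_gt0 ?expR_gt0. Qed.

Lemma sum_gt0 (I : finType) (i0 : I) (f : I -> R) : (forall i, 0 < f i) -> 0 < \sum_i f i.
Proof.
move=> f0; apply: (lt_le_trans (f0 i0)); rewrite (bigD1 i0) //= lerDl sumr_ge0 // => i _.
exact: ltW.
Qed.

Lemma Kv_gt0 v : pos v -> forall x, 0 < Kv v x.
Proof. by move=> vp x; apply: (sum_gt0 y0) => y; rewrite mulr_gt0 ?K_gt0. Qed.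

Lemma U_gt0 v : pos v -> forall x, 0 < U v x.
Proof. by move=> vp x; rewrite /u_upd divr_gt0 ?Kv_gt0. Qed.

Lemma KTu_gt0 u : (forall x, 0 < u x) -> forall y, 0 < KTu u y.
Proof. by move=> up y; apply: (sum_gt0 x0) => x; rewrite mulr_gt0 ?K_gt0. Qed.

Lemma T_gt0 v : pos v -> pos (T v).
Proof. by move=> vp y; rewrite /T /vhat_upd divr_gt0 // KTu_gt0 // => x; apply: U_gt0. Qed.

Lemma T_hom (t : R) v : 0 < t -> pos v -> T (fun y => t * v y) = (fun y => t * T v y).
Proof.
move=> t0 vp; apply/funext => y.
have KvE x : Kv (fun y => t * v y) x = t * Kv v x.
  by rewrite /Defs.Kv mulr_sumr; apply: eq_bigr => i _ /=; rewrite mulrCA.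
have UE x : U (fun y => t * v y) x = t^-1 * U v x.
  by rewrite /u_upd KvE invfM mulrCA.
have KTE : KTu (U (fun y => t * v y)) y = t^-1 * KTu (U v) y.
  by rewrite /Defs.KTu mulr_sumr; apply: eq_bigr => i _; rewrite UE mulrCA.
rewrite /T /vhat_upd KTE invfM invrK mulrCA.
by [].
Qed.

Lemma T_mono v w : pos v -> (forall y, v y <= w y) -> forall y, T v y <= T w y.
Proof.
move=> vp vw y.
have wp : pos w by move=> z; exact: lt_le_trans (vp z) (vw z).
have KvL x : Kv v x <= Kv w x.
  by apply: ler_sum => i _; rewrite ler_wpM2l // ltW ?K_gt0.
have UL x : U w x <= U v x.
  rewrite /u_upd ler_pM2l // lef_pV2 ?posrE ?Kv_gt0 //.
have KTL : KTu (U w) y <= KTu (U v) y.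
  by apply: ler_sum => i _; rewrite ler_wpM2l // ltW ?K_gt0.
rewrite /T /vhat_upd ler_pM2l // lef_pV2 ?posrE // KTu_gt0 // => x; exact: U_gt0.
Qed.

Lemma T_ident v : pos v -> \sum_y v y * KTu (U v) y = 1.
Proof.
move=> vp.
transitivity (\sum_x U v x * Kv v x); last first.
  rewrite -mu1; apply: eq_bigr => x _; rewrite /u_upd mulrAC -mulrA divff ?mulr1 //.
  by rewrite gt_eqF ?Kv_gt0.
rewrite /Defs.KTu /Defs.Kv.
under eq_bigr do rewrite mulr_sumr.
rewrite exchange_big /=; apply: eq_bigr => x _; rewrite mulr_sumr.
by apply: eq_bigr => i _; rewrite mulrCA mulrA mulrC.
Qed.

Lemma nuT v y : pos v -> nu y / T v y = KTu (U v) y.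
Proof.
move=> vp; rewrite /T /vhat_upd invfM invrK mulrA divff ?mul1r //.
by rewrite gt_eqF.
Qed.


Definition Phi (v : Y -> R) := \sum_x mu x * ln (Kv v x) - \sum_y nu y * ln (v y).

Lemma ln_sub (a b : R) : 0 < a -> 0 < b -> ln b - ln a <= (b - a) / a.
Proof.
move=> a0 b0; rewrite -ln_div ?posrE //.
have -> : b / a = 1 + (b / a - 1) by ring.
have -> : (b - a) / a = b / a - 1 by rewrite mulrBl divff ?gt_eqF.
by apply: le_ln1Dx; rewrite ltrBrDr addrC subrr divr_gt0.
Qed.

Lemma ln_strict (a : R) : 1 < a -> ln a < a - 1.
Proof.
move=> a1.
have a0 : 0 < a by apply: lt_trans a1.
have : a < expR (a - 1).
  have := @expR_gt1Dx R (a - 1); rewrite addrCA subrr addr0; apply.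
  by rewrite subr_eq0 gt_eqF.
by rewrite -{1}(lnK a0) ltr_expR.
Qed.

Lemma Phi_scale t v : 0 < t -> pos v -> Phi (fun y => t * v y) = Phi v.
Proof.
move=> t0 vp; rewrite /Phi.
have KvE x : Kv (fun y => t * v y) x = t * Kv v x.
  by rewrite /Defs.Kv mulr_sumr; apply: eq_bigr => i _ /=; rewrite mulrCA.
have -> : \sum_x mu x * ln (Kv (fun y => t * v y) x) = ln t + \sum_x mu x * ln (Kv v x).
  rewrite -[ln t]mul1r -mu1 mulr_suml -big_split; apply: eq_bigr => x _ /=.
  by rewrite KvE lnM ?posrE ?Kv_gt0 // mulrDr mulrC.
have -> : \sum_y nu y * ln (t * v y) = ln t + \sum_y nu y * ln (v y).
  rewrite -[ln t]mul1r -nu1 mulr_suml -big_split; apply: eq_bigr => y _ /=.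
  by rewrite lnM ?posrE // mulrDr mulrC.
ring.
Qed.

Definition step (v : Y -> R) := fun y => Num.min (v y) (T v y).

Definition hterm (v : Y -> R) y :=
  nu y * ((v y - step v y) / T v y - (ln (v y) - ln (step v y))).

Lemma step_pos v : pos v -> pos (step v).
Proof. by move=> vp y; rewrite /step lt_min vp T_gt0. Qed.

Lemma Phi_desc v : pos v -> Phi (step v) + \sum_y hterm v y <= Phi v.
Proof.
move=> vp; set w := step v.
have wp : pos w by exact: step_pos.
have H1 : \sum_x mu x * ln (Kv w x) - \sum_x mu x * ln (Kv v x)
          <= \sum_y (w y - v y) * (nu y / T v y).
  rewrite -sumrB.
  apply: (@le_trans _ _ (\sum_x U v x * (Kv w x - Kv v x))).
    apply: ler_sum => x _; rewrite -mulrBr /u_upd -mulrA; apply: ler_wpM2l; first exact: ltW.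
    by rewrite [_^-1 * _]mulrC; apply: ln_sub; apply: Kv_gt0.

  under eq_bigr do rewrite /Defs.Kv -sumrB mulr_sumr.
  rewrite exchange_big /= le_eqVlt; apply/orP; left; apply/eqP/eq_bigr => y _.
  rewrite nuT // /Defs.KTu mulr_sumr; apply: eq_bigr => x _.
  by rewrite -mulrBr; ring.
have E : \sum_y hterm v y = - \sum_y (w y - v y) * (nu y / T v y)
     - (\sum_y nu y * ln (v y) - \sum_y nu y * ln (w y)).
  rewrite -sumrB -!sumrN -big_split; apply: eq_bigr => y _ /=.
  rewrite /hterm -/w; ring.
rewrite /Phi E; lra.
Qed.

Lemma hterm_ge0 v y : pos v -> 0 <= hterm v y.
Proof.
move=> vp; rewrite /hterm /step; have Tp := T_gt0 vp y; have vy := vp y.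
case: (leP (v y) (T v y)) => h.
  by rewrite subrr mul0r subrr subr0 mulr0.
apply: mulr_ge0; first exact: ltW.
rewrite -ln_div ?posrE // subr_ge0.
have -> : (v y - T v y) / T v y = v y / T v y - 1 by rewrite mulrBl divff ?gt_eqF.
apply: ltW; apply: ln_strict; by rewrite ltr_pdivlMr // mul1r.
Qed.

Lemma hterm_gt0 v y : pos v -> T v y < v y -> 0 < hterm v y.
Proof.
move=> vp h; rewrite /hterm /step; have Tp := T_gt0 vp y; have vy := vp y.
rewrite (min_r (ltW h)).
apply: mulr_gt0; first exact: nu_gt0.
rewrite -ln_div ?posrE // subr_gt0.
have -> : (v y - T v y) / T v y = v y / T v y - 1 by rewrite mulrBl divff ?gt_eqF.
apply: ln_strict; by rewrite ltr_pdivlMr // mul1r.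
Qed.


Lemma le_sum1 (I : finType) (f : I -> R) i : (forall j, 0 <= f j) -> f i <= \sum_j f j.
Proof. by move=> f0; rewrite (bigD1 i) //= lerDl sumr_ge0. Qed.
Arguments le_sum1 {I} f i.

Definition L := \sum_x \sum_y `|ln (K x y)|.

Lemma Phi_lb w y1 : pos w -> (forall y, w y <= 1) -> w y1 = 1 ->
  forall y, nu y * (- ln (w y)) <= Phi w + L.
Proof.
move=> wp w1 wy1 y.
have lnw0 z : 0 <= - ln (w z) by rewrite oppr_ge0 ln_le0.
have HA : - L <= \sum_x mu x * ln (Kv w x).
  rewrite -[- L]mul1r -mu1 mulr_suml; apply: ler_sum => x _.
  apply: ler_wpM2l; first exact: ltW.
  apply: (@le_trans _ _ (ln (K x y1))).
    rewrite lerNl; apply: (le_trans (ler_norm _)); rewrite normrN.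
    rewrite /L; apply: (@le_trans _ _ (\sum_y `|ln (K x y)|)); last first.
      by apply: (le_sum1 (fun x => \sum_y `|ln (K x y)|)) => j; apply: sumr_ge0.
      exact: (le_sum1 (fun y => `|ln (K x y)|) y1).
  rewrite ler_ln ?posrE ?K_gt0 ?Kv_gt0 //.
  by rewrite -[K x y1]mulr1 -wy1 /Defs.Kv (le_sum1 (fun y => K x y * w y)) // => j;
    rewrite mulr_ge0 // ltW ?K_gt0.
have HB : nu y * (- ln (w y)) <= - \sum_y nu y * ln (w y).
  rewrite -sumrN; apply: (le_trans _ (le_sum1 (fun y => - (nu y * ln (w y))) y _)).
    by rewrite mulrN.
  by move=> j; rewrite -mulrN mulr_ge0 // ltW.
rewrite /Phi; lra.
Qed.

Definition P1 := Phi (fun _ => 1).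
Definition delta := expR (- (P1 + L) * \sum_y (nu y)^-1).

Lemma P1L_ge0 : 0 <= P1 + L.
Proof.
have := @Phi_lb (fun _ => 1) y0 (fun _ => ltr01) (fun _ => lexx 1) erefl y0.
by rewrite ln1 oppr0 mulr0.
Qed.

Lemma delta_gt0 : 0 < delta. Proof. exact: expR_gt0. Qed.

Lemma delta_le1 : delta <= 1.
Proof.
rewrite /delta expR_le1 mulNr oppr_le0 mulr_ge0 ?P1L_ge0 // sumr_ge0 // => y _.
by rewrite invr_ge0 ltW.
Qed.

Lemma in_D w y1 : pos w -> (forall y, w y <= 1) -> w y1 = 1 -> Phi w <= P1 ->
  forall y, delta <= w y.
Proof.
move=> wp w1 wy1 wP y.
have H := Phi_lb wp w1 wy1 y.
have H2 : - ln (w y) <= (P1 + L) * \sum_y (nu y)^-1.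
  apply: (@le_trans _ _ ((P1 + L) / nu y)).
    by rewrite ler_pdivlMr // mulrC; lra.
  apply: ler_wpM2l; first exact: P1L_ge0.
  by apply: (le_sum1 (fun y => (nu y)^-1)) => j; rewrite invr_ge0 ltW.
rewrite /delta -(lnK (wp y)) ler_expR; lra.
Qed.

Lemma Phi_cvg (T : Type) (F : set_system T) {FF : Filter F} (g : T -> Y -> R) w :
  pos w -> (forall y, g t y @[t --> F] --> w y) -> Phi (g t) @[t --> F] --> Phi w.
Proof.
move=> wp gw; rewrite /Phi; apply: cvgB.
  apply: (@cvg_sumR R X _ _ _ (fun x t => mu x * ln (Kv (g t) x)) (fun x => mu x * ln (Kv w x))) => x.
  apply: cvgMl_tmp; apply: ln_cvg; first exact: Kv_gt0.
  apply: (@cvg_sumR R Y _ _ _ (fun y t => K x y * g t y) (fun y => K x y * w y)) => y.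
  by apply: cvgMl_tmp; apply: gw.
apply: (@cvg_sumR R Y _ _ _ (fun y t => nu y * ln (g t y)) (fun y => nu y * ln (w y))) => y.
by apply: cvgMl_tmp; apply: ln_cvg => //; apply: gw.
Qed.

Lemma Phi_cont w : pos w -> Phi z @[z --> w] --> Phi w.
Proof.
move=> wp; apply: (@Phi_cvg _ _ (nbhs_filter w) id) => // y; exact: proj_cvg.
Qed.

Lemma argmax_ex (f : Y -> R) : exists y1, forall y, f y <= f y1.
Proof. by case: (@arg_maxP _ R Y y0 xpredT f isT) => y1 _ H; exists y1 => y; apply: H. Qed.

Lemma fixed_of_le v : pos v -> (forall y, v y <= T v y) -> forall y, T v y = v y.
Proof.
move=> vp vT.
have KTp := KTu_gt0 (U_gt0 vp).
have E : \sum_y (T v y - v y) * KTu (U v) y = 0.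
  under eq_bigr do rewrite mulrBl.
  rewrite sumrB T_ident // -nu1; apply/eqP; rewrite subr_eq0; apply/eqP.
  by apply: eq_bigr => y _; rewrite -nuT // mulrC divfK // gt_eqF // T_gt0.
have H0 : forall i : Y, true -> 0 <= (T v i - v i) * KTu (U v) i.
  by move=> i _; rewrite mulr_ge0 ?subr_ge0 // ltW.
move=> y; have := @psumr_eq0P _ _ _ _ H0 E y isT; move/eqP.
by rewrite mulf_eq0 (gt_eqF (KTp y)) orbF subr_eq0 => /eqP.
Qed.

Lemma exists_fixed : exists v, pos v /\ forall y, T v y = v y.
Proof.
pose D := [set w : Y -> R | forall y, `[delta, 1]%classic (w y)].
have D1 : D (fun _ => 1) by move=> y /=; rewrite in_itv /= delta_le1 lexx.
have Dne : D !=set0 by exists (fun _ => 1).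
have Dpos w : D w -> pos w.
  by move=> Dw y; have := Dw y; rewrite /= in_itv /= => /andP[h _]; apply: lt_le_trans h; exact: delta_gt0.
have Dcont : {within D, continuous Phi}.
  apply: continuous_in_subspaceT => w /set_mem Dw.
  exact: Phi_cont (Dpos _ Dw).
have [ws /set_mem wsD wsmin] := compact_EVT_min Dne (@D_compact R Y delta 1) Dcont.
have wsp := Dpos _ wsD.
exists ws; split => //; apply: fixed_of_le => //.
pose w' := step ws.
have w'p : pos w' := step_pos wsp.
have [y1 Hy1] := argmax_ex w'.
pose M := w' y1.
have M0 : 0 < M := w'p y1.
pose w'' := fun y => M^-1 * w' y.
have w''p : pos w'' by move=> y; rewrite mulr_gt0 // invr_gt0.
have w''1 : forall y, w'' y <= 1.
  by move=> y; rewrite /w'' ler_pdivrMl // mulr1.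
have w''y1 : w'' y1 = 1 by rewrite /w'' mulVf // gt_eqF.
have PhiE : Phi w'' = Phi w' by rewrite /w'' Phi_scale // invr_gt0.
have Hdesc := Phi_desc wsp.
have S0 : 0 <= \sum_y hterm ws y by apply: sumr_ge0 => y _; exact: hterm_ge0.
have PwsP1 : Phi ws <= P1 by apply: wsmin; apply/mem_set.
have Dw'' : D w''.
  move=> y /=; rewrite in_itv /= w''1 andbT.
  apply: (in_D w''p w''1 w''y1); rewrite PhiE; rewrite -/w' in Hdesc; lra.
have := wsmin w'' (mem_set Dw''); rewrite PhiE => Hmin.
have Sle : \sum_y hterm ws y <= 0 by rewrite -/w' in Hdesc; lra.
have Seq : \sum_y hterm ws y = 0 by apply/eqP; rewrite eq_le Sle S0.
move=> y; rewrite leNgt; apply/negP => hlt.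
have := @psumr_eq0P _ _ _ _ (fun i _ => hterm_ge0 i wsp) Seq y isT.
by move/eqP; rewrite gt_eqF // hterm_gt0.
Qed.

Section Cvg.
Variables (Tt : Type) (F : set_system Tt) (FF : Filter F).

Lemma Kv_cvg (g : Tt -> Y -> R) w x : (forall y, g t y @[t --> F] --> w y) ->
  Kv (g t) x @[t --> F] --> Kv w x.
Proof.
move=> gw; apply: (@cvg_sumR R Y _ _ _ (fun y t => K x y * g t y) (fun y => K x y * w y)) => y.
by apply: cvgMl_tmp; apply: gw.
Qed.

Lemma U_cvg (g : Tt -> Y -> R) w x : pos w -> (forall y, g t y @[t --> F] --> w y) ->
  U (g t) x @[t --> F] --> U w x.
Proof.
move=> wp gw; rewrite /u_upd; apply: cvgMl_tmp.
apply: (@cvgV _ _ _ _ (fun t => Kv (g t) x)); first by rewrite gt_eqF // Kv_gt0.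
exact: Kv_cvg.
Qed.

Lemma KTu_cvg (h : Tt -> X -> R) u y : (forall x, h t x @[t --> F] --> u x) ->
  KTu (h t) y @[t --> F] --> KTu u y.
Proof.
move=> hu; apply: (@cvg_sumR R X _ _ _ (fun x t => K x y * h t x) (fun x => K x y * u x)) => x.
by apply: cvgMl_tmp; apply: hu.
Qed.

Lemma T_cvg (g : Tt -> Y -> R) w y : pos w -> (forall y, g t y @[t --> F] --> w y) ->
  T (g t) y @[t --> F] --> T w y.
Proof.
move=> wp gw; rewrite /T /vhat_upd; apply: cvgMl_tmp.
apply: (@cvgV _ _ _ _ (fun t => KTu (U (g t)) y)).
  by rewrite gt_eqF // KTu_gt0 // => x; apply: U_gt0.
by apply: KTu_cvg => x; apply: U_cvg.
Qed.

End Cvg.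

Section Iter.
Variables (v0 : Y -> R) (v0p : pos v0).
Local Notation vi := (v_iter mu nu c eps v0).

Lemma vi_step l : vi l.+1 = step (vi l).
Proof. by []. Qed.

Lemma vi_pos l : pos (vi l).
Proof. by elim: l => [|l IH] //; rewrite vi_step; apply: step_pos. Qed.

Lemma vi_dec l y : vi l.+1 y <= vi l y.
Proof. by rewrite vi_step /step ge_min lexx. Qed.

Lemma vi_lb p : pos p -> (forall y, T p y = p y) -> (forall y, p y <= v0 y) ->
  forall l y, p y <= vi l y.
Proof.
move=> pp pT pv0; elim => [|l IH] y //.
rewrite vi_step /step le_min IH /= -pT.
exact: T_mono.
Qed.

Lemma exists_lb : exists p, pos p /\ (forall y, T p y = p y) /\ (forall y, p y <= v0 y).
Proof.
have [vs [vsp vsT]] := exists_fixed.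
have [ym Hym] := argmax_ex (fun y => - (v0 y / vs y)).
pose t := v0 ym / vs ym.
have t0 : 0 < t by rewrite divr_gt0.
exists (fun y => t * vs y); split; first by move=> y; rewrite mulr_gt0.
split.
  move=> y; rewrite T_hom //; congr (_ * _); exact: vsT.
move=> y; have := Hym y; rewrite lerN2 -/t => h.
by rewrite -ler_pdivlMr.
Qed.

Lemma main_sec : exists (u : X -> R) (v : Y -> R),
    ((forall x, 0 < u x) /\ (forall y, 0 < v y)) /\
    (forall x, \sum_(y : Y) u x * K x y * v y = mu x) /\
    (forall y, \sum_(x : X) u x * K x y * v y = nu y) /\
    (forall x, u_iter mu nu c eps v0 l x @[l --> \oo] --> u x) /\
    (forall y, v_iter mu nu c eps v0 l y @[l --> \oo] --> v y) /\
    (q_iter mu nu c eps v0 l @[l --> \oo] --> (1 : R)).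
Proof.
have [p [pp [pT pv0]]] := exists_lb.
pose v y := inf ((fun l => vi l y) @` setT).
have vcv y : vi l y @[l --> \oo] --> v y.
  apply: nonincreasing_cvgn.
    by apply/nonincreasing_seqP => n; exact: vi_dec.
  by exists (p y) => _ [n _ <-]; exact: vi_lb.
have vge y : p y <= v y.
  apply: (ler_cvg_to (cvg_cst (p y)) (vcv y)).
  by apply: nearW => l; exact: vi_lb.
have vp : pos v by move=> y; exact: lt_le_trans (pp y) (vge y).
have vle y : v y <= T v y.
  have cs : vi l.+1 y @[l --> \oo] --> v y.
    by have := vcv y; rewrite -cvg_shiftS.
  have cT : T (vi l) y @[l --> \oo] --> T v y.
    exact: (@T_cvg nat \oo _ (fun l => vi l) v y vp vcv).
  apply: (ler_cvg_to cs cT); apply: nearW => l.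
  by rewrite vi_step /step ge_min lexx orbT.
have vT := fixed_of_le vp vle.
have ucv x : u_iter mu nu c eps v0 l x @[l --> \oo] --> U v x.
  rewrite -cvg_shiftS /=.
  exact: (@U_cvg nat \oo _ (fun l => vi l) v x vp vcv).
exists (U v), v; split; first by split => // x; apply: U_gt0.
have row x : \sum_y U v x * K x y * v y = mu x.
  have -> : mu x = U v x * Kv v x by rewrite /u_upd divfK // gt_eqF // Kv_gt0.
  rewrite /Defs.Kv mulr_sumr; apply: eq_bigr => y _; by rewrite mulrA.
split => //; split.
  move=> y; rewrite -[RHS](@divfK _ (T v y)) ?gt_eqF ?T_gt0 // nuT //.
  rewrite vT /Defs.KTu mulr_suml; apply: eq_bigr => x _; ring.
split => //; split => //.
have -> : 1 = \sum_x \sum_y U v x * K x y * v y.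
  by rewrite -mu1; apply: eq_bigr => x _; rewrite row.
rewrite /q_iter /pi_iter.
apply: (@cvg_sumR R X _ _ _ (fun x l => \sum_y u_iter mu nu c eps v0 l x * K x y * vi l y)
          (fun x => \sum_y U v x * K x y * v y)) => x.
apply: (@cvg_sumR R Y _ _ _ (fun y l => u_iter mu nu c eps v0 l x * K x y * vi l y)
          (fun y => U v x * K x y * v y)) => y.
apply: cvgM; last exact: vcv.
by apply: cvgMr_tmp; exact: ucv.
Qed.

End Iter.

End Sk.

Theorem mainTheorem5 (R : realType) (X Y : finType)
  (mu : X -> R) (nu : Y -> R) (c : X -> Y -> R) (eps : R) (v0 : Y -> R) :
  (forall x, 0 < mu x) -> \sum_(x : X) mu x = 1 ->
  (forall y, 0 < nu y) -> \sum_(y : Y) nu y = 1 ->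
  (forall x y, 0 <= c x y) -> 0 < eps ->
  (forall y, 0 < v0 y) ->
  exists (u : X -> R) (v : Y -> R),
    ((forall x, 0 < u x) /\ (forall y, 0 < v y)) /\
    (forall x, \sum_(y : Y) u x * kernelK mu nu c eps x y * v y = mu x) /\
    (forall y, \sum_(x : X) u x * kernelK mu nu c eps x y * v y = nu y) /\
    (forall x, u_iter mu nu c eps v0 l x @[l --> \oo] --> u x) /\
    (forall y, v_iter mu nu c eps v0 l y @[l --> \oo] --> v y) /\
    (q_iter mu nu c eps v0 l @[l --> \oo] --> (1 : R)).
Proof.
move=> mu_gt0 mu1 nu_gt0 nu1 _ _ v0p.
have [x0 _ | hX] := pickP (@predT X); last first.
  move: mu1; rewrite big1 => [/eqP|x _]; last by move: (hX x).
  by rewrite eq_sym oner_eq0.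
have [y0 _ | hY] := pickP (@predT Y); last first.
  move: nu1; rewrite big1 => [/eqP|y _]; last by move: (hY y).
  by rewrite eq_sym oner_eq0.
exact: (@main_sec R X Y mu nu c eps mu_gt0 mu1 nu_gt0 nu1 x0 y0 v0 v0p).
Qed.
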